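(* Let $\mathcal{H}_1=(\mathcal{A}_1,\Delta_{\mathcal{A}_1},S_{\mathcal{A}_1},\varepsilon_{\mathcal{A}_1})$ and $\mathcal{H}_2=(\mathcal{A}_2,\Delta_{\mathcal{A}_2},S_{\mathcal{A}_2},\varepsilon_{\mathcal{A}_2})$ be Hopf algebras over a field $k$, $\mathcal{B}$ a unital $k$-algebra, and $\alpha:\mathcal{A}_1\to\mathcal{B}\otimes\mathcal{A}_2$ a quantum family of homomorphisms from $\mathcal{H}_1$ to $\mathcal{H}_2$. Then for all $a,a'\in\mathcal{A}_1$, \[\alpha(a)_{12}\,\alpha(a')_{13}=\alpha(a')_{13}\,\alpha(a)_{12}\quad\text{in }\mathcal{B}\otimes\mathcal{A}_2\otimes\mathcal{A}_2.\]
   Context: Sweedler notation $\Delta(a)=a_{(1)}\otimes a_{(2)}$. For $x\in\mathcal{B}\otimes\mathcal{A}_2$, $x_{12}$ and $x_{13}$ denote $x$ placed in legs (1,2), resp. (1,3), of $\mathcal{B}\otimes\mathcal{A}_2\otimes\mathcal{A}_2$ with $\mathds{1}$ in the remaining leg. Definition: a unital algebra homomorphism $\alpha:\mathcal{A}_1\to\mathcal{B}\otimes\mathcal{A}_2$ is a quantum family of homomorphisms from $\mathcal{H}_1$ to $\mathcal{H}_2$ if $\alpha(a_{(1)})_{12}\alpha(a_{(2)})_{13}=(\mathrm{id}_{\mathcal{B}}\otimes\Delta_{\mathcal{A}_2})(\alpha(a))$ for all $a\in\mathcal{A}_1$. *)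

(* Defs.v *)
From HB Require Import structures.
From mathcomp Require Import all_boot all_order all_algebra.
Set Implicit Arguments. Unset Strict Implicit. Unset Printing Implicit Defensive.
Import GRing.Theory.
Local Open Scope ring_scope.

Section HopfDefs.
Variable k : fieldType.

Definition bilin (U V W : lmodType k) (f : U -> V -> W) : Prop :=
  (forall u, linear (f u)) /\ (forall v, linear (fun u => f u v)).

Definition trilin (U V X W : lmodType k) (f : U -> V -> X -> W) : Prop :=
  [/\ forall u v, linear (f u v),
      forall u x, linear (fun v => f u v x)
    & forall v x, linear (fun u => f u v x)].

(* (T, t) is a tensor product U (x) V over k: t is bilinear, every bilinear
   map factors linearly through t, and the factorisation is unique. *)
Definition is_tensor2 (U V T : lmodType k) (t : U -> V -> T) : Prop :=
  [/\ bilin t,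
      forall (W : lmodType k) (f : U -> V -> W), bilin f ->
        exists g : T -> W, linear g /\ forall u v, g (t u v) = f u v
    & forall (W : lmodType k) (g h : T -> W), linear g -> linear h ->
        (forall u v, g (t u v) = h (t u v)) -> forall x, g x = h x].

Definition is_tensor3 (U V X T : lmodType k) (t : U -> V -> X -> T) : Prop :=
  [/\ trilin t,
      forall (W : lmodType k) (f : U -> V -> X -> W), trilin f ->
        exists g : T -> W, linear g /\ forall u v x, g (t u v x) = f u v x
    & forall (W : lmodType k) (g h : T -> W), linear g -> linear h ->
        (forall u v x, g (t u v x) = h (t u v x)) -> forall y, g y = h y].

Definition alg_tensor2 (U V T : algType k) (t : U -> V -> T) : Prop :=
  [/\ is_tensor2 t, t 1 1 = 1
    & forall u v u' v', t u v * t u' v' = t (u * u') (v * v')].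

Definition alg_tensor3 (U V X T : algType k) (t : U -> V -> X -> T) : Prop :=
  [/\ is_tensor3 t, t 1 1 1 = 1
    & forall u v x u' v' x', t u v x * t u' v' x' = t (u * u') (v * v') (x * x')].

Definition alg_morph (A C : algType k) (f : A -> C) : Prop :=
  [/\ linear f, f 1 = 1 & forall x y, f (x * y) = f x * f y].

Definition alg_char (A : algType k) (e : A -> k) : Prop :=
  [/\ forall (c : k) x y, e (c *: x + y) = c * e x + e y,
      e 1 = 1 & forall x y, e (x * y) = e x * e y].

(* (A, Delta, S, eps) with Delta : A -> T, where (T, t) is A (x) A. *)
Definition Hopf (A T : algType k) (t : A -> A -> T)
    (Delta : A -> T) (S : A -> A) (eps : A -> k) : Prop :=
  [/\ alg_tensor2 t, alg_morph Delta, alg_char eps & linear S] /\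
   (* coassociativity: (Delta (x) id) Delta = (id (x) Delta) Delta *)
   exists (T3 : lmodType k) (t3 : A -> A -> A -> T3)
          (E : T -> A -> T3) (F : A -> T -> T3) (L R : T -> T3),
     is_tensor3 t3 /\
     [/\ (forall b, linear (fun x => E x b)) /\ (forall c d b, E (t c d) b = t3 c d b),
         (forall a, linear (F a)) /\ (forall a c d, F a (t c d) = t3 a c d),
         linear L /\ (forall c d, L (t c d) = E (Delta c) d),
         linear R /\ (forall c d, R (t c d) = F c (Delta d))
       & forall a, L (Delta a) = R (Delta a)] /\
   (* counit: (eps (x) id) Delta = id = (id (x) eps) Delta *)
   exists C1 C2 : T -> A,
     [/\ linear C1, linear C2,
         forall a b, C1 (t a b) = eps a *: b,
         forall a b, C2 (t a b) = eps b *: a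
       & forall x, C1 (Delta x) = x /\ C2 (Delta x) = x] /\
   (* antipode: m (S (x) id) Delta = eta eps = m (id (x) S) Delta *)
   exists M1 M2 : T -> A,
     [/\ linear M1, linear M2,
         forall a b, M1 (t a b) = S a * b,
         forall a b, M2 (t a b) = a * S b
       & forall x, M1 (Delta x) = (eps x)%:A /\ M2 (Delta x) = (eps x)%:A].

Definition is_leg12 (B A2 TB T3 : algType k) (tB : B -> A2 -> TB)
    (t3 : B -> A2 -> A2 -> T3) (l : TB -> T3) : Prop :=
  linear l /\ forall b a, l (tB b a) = t3 b a 1.
Definition is_leg13 (B A2 TB T3 : algType k) (tB : B -> A2 -> TB)
    (t3 : B -> A2 -> A2 -> T3) (l : TB -> T3) : Prop :=
  linear l /\ forall b a, l (tB b a) = t3 b 1 a.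

(* alpha : A1 -> B (x) A2 unital algebra homomorphism with
   alpha(a_(1))_12 alpha(a_(2))_13 = (id_B (x) Delta_2)(alpha(a)).
   Phi is the linear map c (x) d |-> alpha(c)_12 alpha(d)_13 on A1 (x) A1,
   so that Phi (Delta1 a) is the Sweedler sum; D is id_B (x) Delta_2. *)
Definition qfam_hom (A1 T11 B A2 TB T22 T3 : algType k)
    (t11 : A1 -> A1 -> T11) (Delta1 : A1 -> T11)
    (tB : B -> A2 -> TB) (t22 : A2 -> A2 -> T22) (Delta2 : A2 -> T22)
    (t3 : B -> A2 -> A2 -> T3) (leg12 leg13 : TB -> T3)
    (alpha : A1 -> TB) : Prop :=
  alg_morph alpha /\
  exists (Phi : T11 -> T3) (G : B -> T22 -> T3) (D : TB -> T3),
    [/\ linear Phi /\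
          (forall c d, Phi (t11 c d) = leg12 (alpha c) * leg13 (alpha d)),
        (forall b, linear (G b)) /\ (forall b c d, G b (t22 c d) = t3 b c d),
        linear D /\ (forall b a, D (tB b a) = G b (Delta2 a))
      & forall a, Phi (Delta1 a) = D (alpha a)].

End HopfDefs.

(* Main.v *)
Require Import Defs.
From HB Require Import structures.
From mathcomp Require Import all_boot all_order all_algebra.
From Stdlib Require Import IndefiniteDescription.
Import GRing.Theory.
Local Open Scope ring_scope.

Section Gen.
Variable k : fieldType.

Lemma linZ (U V : lmodType k) (f : U -> V) : linear f -> forall r x, f (r *: x) = r *: f x.
Proof. move=> H r x; exact: (scalable_linear H). Qed.

Lemma lin_comp (U V W : lmodType k) (f : U -> V) (g : V -> W) :
  linear f -> linear g -> linear (fun x => g (f x)).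
Proof. by move=> Hf Hg r x y; rewrite Hf Hg. Qed.

Lemma lin_mull (X : algType k) (c : X) : linear (fun x : X => c * x).
Proof. by move=> r x y; rewrite mulrDr scalerAr. Qed.

Lemma lin_mulr (X : algType k) (c : X) : linear (fun x : X => x * c).
Proof. by move=> r x y; rewrite mulrDl scalerAl. Qed.

Lemma mult_ext (U V T X : algType k) (t : U -> V -> T) (h1 h2 h3 : T -> X) :
 alg_tensor2 t -> linear h1 -> linear h2 -> linear h3 ->
 (forall u v u' v', h1 (t u v) * h2 (t u' v') = h3 (t (u * u') (v * v'))) ->
 forall x y, h1 x * h2 y = h3 (x * y).
Proof.
move=> [[_ _ Hu] _ Hm] H1 H2 H3 Hp.
have step : forall u' v' x, h1 x * h2 (t u' v') = h3 (x * t u' v').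
  move=> u' v'; apply: (Hu _ (fun x => h1 x * h2 (t u' v')) (fun x => h3 (x * t u' v'))).
  - by move=> r x y; rewrite H1 mulrDl -scalerAl.
  - by move=> r x y; rewrite mulrDl -scalerAl H3.
  - by move=> u v; rewrite Hp Hm.
move=> x; apply: (Hu _ (fun y => h1 x * h2 y) (fun y => h3 (x * y))).
- by move=> r z y; rewrite H2 mulrDr -scalerAr.
- by move=> r z y; rewrite mulrDr -scalerAr H3.
- move=> u v; exact: step.
Qed.

End Gen.
Ltac lintac := rewrite ?(mulrDl, mulrDr) -?(scalerAl, scalerAr) ?mulrA.
Arguments linZ {k U V f}.

Theorem theorem3p5 (k : fieldType)
  (A1 T11 A2 T22 B TB T3 : algType k)
  (t11 : A1 -> A1 -> T11) (Delta1 : A1 -> T11) (S1 : A1 -> A1) (eps1 : A1 -> k)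
  (t22 : A2 -> A2 -> T22) (Delta2 : A2 -> T22) (S2 : A2 -> A2) (eps2 : A2 -> k)
  (tB : B -> A2 -> TB) (t3 : B -> A2 -> A2 -> T3)
  (leg12 leg13 : TB -> T3) (alpha : A1 -> TB) :
  Hopf t11 Delta1 S1 eps1 ->
  Hopf t22 Delta2 S2 eps2 ->
  alg_tensor2 tB ->
  alg_tensor3 t3 ->
  is_leg12 tB t3 leg12 ->
  is_leg13 tB t3 leg13 ->
  qfam_hom t11 Delta1 tB t22 Delta2 t3 leg12 leg13 alpha ->
  forall a a' : A1,
    leg12 (alpha a) * leg13 (alpha a') = leg13 (alpha a') * leg12 (alpha a).
Proof.
move=> [[Ht11 HD1 He1 HS1] [T3h [t3h [E [F [L [R [Ht3h
  [[[HEl HE] [HFl HF] [HLl HL] [HRl HR] HLR]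
   [C1 [C2 [[HC1l HC2l HC1 HC2 HC] [M1 [M2 [HM1l HM2l HM1 HM2 HM]]]]]]]]]]]]]]].
move=> [[Ht22 HD2 _ _] _] HtB Ht3 [Hl12 H12] [Hl13 H13].
move=> [[Hal Ha1 Ham] [Phi [G [D [[HPhil HPhi] [HGl HG] [HDl HDe] Hkey]]]]].
have [_ Ht31 Ht3m] := Ht3.
have [[[Bt11l Bt11r] _ Un11] _ Ht11m] := Ht11.
have [_ Ex3 _] := Ht3h.
have [Hd1l _ Hd1m] := HD1.
pose P := fun c => leg12 (alpha c).
pose Q := fun c => leg13 (alpha c).
have HPhi' : forall c d, Phi (t11 c d) = P c * Q d := HPhi.
have PL : linear P by move=> r x y; rewrite /P Hal Hl12.
have QL : linear Q by move=> r x y; rewrite /Q Hal Hl13.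
have [[HtBt _ UnB] HtB1 HtBm] := HtB.
have l12m : forall x y, leg12 x * leg12 y = leg12 (x * y).
  apply: (@mult_ext k _ _ _ _ tB leg12 leg12 leg12 HtB Hl12 Hl12 Hl12) => u v u' v'.
  by rewrite !H12 Ht3m mulr1.
have l13m : forall x y, leg13 x * leg13 y = leg13 (x * y).
  apply: (@mult_ext k _ _ _ _ tB leg13 leg13 leg13 HtB Hl13 Hl13 Hl13) => u v u' v'.
  by rewrite !H13 Ht3m mulr1.
have Pm : forall x y, P (x * y) = P x * P y by move=> x y; rewrite /P Ham l12m.
have Qm : forall x y, Q (x * y) = Q x * Q y by move=> x y; rewrite /Q Ham l13m.
have P1 : P 1 = 1 by rewrite /P Ha1 -HtB1 H12 Ht31.
have Q1 : Q 1 = 1 by rewrite /Q Ha1 -HtB1 H13 Ht31.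
have PA : forall r, P (r%:A) = r%:A by move=> r; rewrite (linZ PL) P1.
have QA : forall r, Q (r%:A) = r%:A by move=> r; rewrite (linZ QL) Q1.
pose M := fun z => Phi (Delta1 z).
have Gm : forall b b' y y', G b y * G b' y' = G (b * b') (y * y').
  move=> b b'; apply: (@mult_ext k _ _ _ _ t22 _ _ _ Ht22 (HGl b) (HGl b') (HGl (b * b'))) => u v u' v'.
  by rewrite !HG Ht3m.
have Dm : forall x y, D x * D y = D (x * y).
  apply: (@mult_ext k _ _ _ _ tB D D D HtB HDl HDl HDl) => u v u' v'.
  have [_ _ HD2m] := HD2.
  by rewrite !HDe Gm HD2m.
have Mm : forall x y, M (x * y) = M x * M y.
  by move=> x y; rewrite /M !Hkey Ham Dm.
have [g1 [g1l g1e]] : exists g : T3h -> T3, linear g /\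
    forall c d e, g (t3h c d e) = P (S1 c) * P d * Q e.
  apply: (Ex3 T3 (fun c d e => P (S1 c) * P d * Q e)); split => *.
  - by move=> r x y /=; rewrite QL; lintac.
  - by move=> r x y /=; rewrite PL; lintac.
  - by move=> r x y /=; rewrite HS1 PL; lintac.
have g1E : forall y e, g1 (E y e) = P (M1 y) * Q e.
  move=> y e; apply: (Un11 _ (fun y => g1 (E y e)) (fun y => P (M1 y) * Q e)).
  - by move=> r x z /=; rewrite (HEl e r x z) g1l.
  - by move=> r x z /=; rewrite HM1l PL; lintac.
  - by move=> c d; rewrite HE g1e HM1 Pm.
have g1F : forall c y, g1 (F c y) = P (S1 c) * Phi y.
  move=> c; apply: (Un11 _ (fun y => g1 (F c y)) (fun y => P (S1 c) * Phi y)).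
  - by move=> r x z /=; rewrite HFl g1l.
  - by move=> r x z /=; rewrite HPhil; lintac.
  - by move=> d e; rewrite HF g1e HPhi mulrA.
have g1L : forall x, g1 (L x) = Q (C1 x).
  apply: (Un11 _ (fun x => g1 (L x)) (fun x => Q (C1 x))).
  - by move=> r x z /=; rewrite HLl g1l.
  - by move=> r x z /=; rewrite HC1l QL.
  - move=> c d; rewrite HL g1E HC1 (HM c).1 PA (linZ QL).
    by rewrite -scalerAl mul1r.
have K1e : forall a, g1 (R (Delta1 a)) = Q a.
  by move=> a; rewrite -HLR g1L (HC a).1.
have K1t : forall c d, g1 (R (t11 c d)) = P (S1 c) * M d.
  by move=> c d; rewrite HR g1F.
have [g2 [g2l g2e]] : exists g : T3h -> T3, linear g /\
    forall c d e, g (t3h c d e) = P c * Q d * Q (S1 e).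
  apply: (Ex3 T3 (fun c d e => P c * Q d * Q (S1 e))); split => *.
  - by move=> r x y /=; rewrite HS1 QL; lintac.
  - by move=> r x y /=; rewrite QL; lintac.
  - by move=> r x y /=; rewrite PL; lintac.
have g2F : forall c y, g2 (F c y) = P c * Q (M2 y).
  move=> c; apply: (Un11 _ (fun y => g2 (F c y)) (fun y => P c * Q (M2 y))).
  - by move=> r x z /=; rewrite HFl g2l.
  - by move=> r x z /=; rewrite HM2l QL; lintac.
  - by move=> d e; rewrite HF g2e HM2 Qm mulrA.
have g2R : forall x, g2 (R x) = P (C2 x).
  apply: (Un11 _ (fun x => g2 (R x)) (fun x => P (C2 x))).
  - by move=> r x z /=; rewrite HRl g2l.
  - by move=> r x z /=; rewrite HC2l PL.
  - move=> c d; rewrite HR g2F HC2 (HM d).2 QA (linZ PL).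
    by rewrite -scalerAr mulr1.
have g2E : forall y e, g2 (E y e) = Phi y * Q (S1 e).
  move=> y e; apply: (Un11 _ (fun y => g2 (E y e)) (fun y => Phi y * Q (S1 e))).
  - by move=> r x z /=; rewrite (HEl e r x z) g2l.
  - by move=> r x z /=; rewrite HPhil; lintac.
  - by move=> c d; rewrite HE g2e HPhi.
have K2e : forall b, g2 (L (Delta1 b)) = P b.
  by move=> b; rewrite HLR g2R (HC b).2.
have K2t : forall c d, g2 (L (t11 c d)) = M c * Q (S1 d).
  by move=> c d; rewrite HL g2E.
have [Nf HN] : exists Nf : A1 -> T11 -> T3, forall e, linear (Nf e) /\
    forall u v, Nf e (t11 u v) = P u * Q e * Q v.
  apply: (functional_choice (fun e (N : T11 -> T3) => linear N /\
    forall u v, N (t11 u v) = P u * Q e * Q v)) => e.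
  have [_ Ex11 _] := (let: And3 a b c := Ht11 in a).
  apply: (Ex11 T3 (fun u v => P u * Q e * Q v)); split => *.
  - by move=> r x y /=; rewrite QL; lintac.
  - by move=> r x y /=; rewrite PL; lintac.
have Nlin : forall w, linear (fun e => Nf e w).
  move=> w r e e'.
  apply: (Un11 _ (Nf (r *: e + e')) (fun w => r *: Nf e w + Nf e' w)).
  - exact: (HN _).1.
  - move=> s x z; rewrite (HN e).1 (HN e').1 !scalerDr !scalerA.
    by rewrite mulrC; rewrite -!addrA; congr (_ + _); rewrite addrCA.
  - by move=> u v; rewrite !(HN _).2 QL; lintac.
have step3 : forall z a, Nf a (Delta1 z) = Q a * M z.
  move=> z a.
  have [g3 [g3l g3e]] : exists g : T3h -> T3, linear g /\
      forall c d e, g (t3h c d e) = P (S1 c) * Phi (t11 d e * Delta1 z).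
    apply: (Ex3 T3 (fun c d e => P (S1 c) * Phi (t11 d e * Delta1 z))); split => *.
    - by move=> r x y /=; rewrite Bt11l mulrDl -scalerAl HPhil; lintac.
    - by move=> r x y /=; rewrite Bt11r mulrDl -scalerAl HPhil; lintac.
    - by move=> r x y /=; rewrite HS1 PL; lintac.
  have PhiT : forall d e w, Phi (t11 d e * w) = P d * Nf e w.
    move=> d e; apply: (Un11 _ (fun w => Phi (t11 d e * w)) (fun w => P d * Nf e w)).
    - by move=> r x y /=; rewrite mulrDr -scalerAr HPhil.
    - by move=> r x y /=; rewrite (HN e).1; lintac.
    - by move=> u v; rewrite Ht11m HPhi' (HN e).2 !Pm !Qm !mulrA.
  have g3E : forall y e, g3 (E y e) = P (M1 y) * Nf e (Delta1 z).
    move=> y e; apply: (Un11 _ (fun y => g3 (E y e)) (fun y => P (M1 y) * Nf e (Delta1 z))).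
    - by move=> r x y' /=; rewrite (HEl e r x y') g3l.
    - by move=> r x y' /=; rewrite HM1l PL; lintac.
    - by move=> c d; rewrite HE g3e PhiT HM1 Pm mulrA.
  have g3L : forall x, g3 (L x) = Nf (C1 x) (Delta1 z).
    apply: (Un11 _ (fun x => g3 (L x)) (fun x => Nf (C1 x) (Delta1 z))).
    - by move=> r x y /=; rewrite HLl g3l.
    - by move=> r x y /=; rewrite HC1l; move: (Nlin (Delta1 z) r (C1 x) (C1 y)) => /= ->.
    - move=> c d; rewrite HL g3E HC1 (HM c).1 PA -scalerAl mul1r.
      by move: (linZ (Nlin (Delta1 z)) (eps1 c) d) => /= ->.
  have g3F : forall c y, g3 (F c y) = P (S1 c) * Phi (y * Delta1 z).
    move=> c; apply: (Un11 _ (fun y => g3 (F c y)) (fun y => P (S1 c) * Phi (y * Delta1 z))).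
    - by move=> r x y /=; rewrite HFl g3l.
    - by move=> r x y /=; rewrite mulrDl -scalerAl HPhil; lintac.
    - by move=> d e; rewrite HF g3e.
  have g3R : forall x, g3 (R x) = g1 (R x) * M z.
    apply: (Un11 _ (fun x => g3 (R x)) (fun x => g1 (R x) * M z)).
    - by move=> r x y /=; rewrite HRl g3l.
    - by move=> r x y /=; rewrite HRl g1l; lintac.
    - move=> c d; rewrite HR g3F -HR K1t -Hd1m.
      by rewrite -/(M (d * z)) Mm mulrA.
  have := g3L (Delta1 a); rewrite HLR g3R K1e (HC a).1 => ->.
  by [].
have step4 : forall a b, Q a * P b = P b * Q a.
  move=> a b.
  have [g4 [g4l g4e]] : exists g : T3h -> T3, linear g /\
      forall c d e, g (t3h c d e) = P c * Q a * Q d * Q (S1 e).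
    apply: (Ex3 T3 (fun c d e => P c * Q a * Q d * Q (S1 e))); split => *.
    - by move=> r x y /=; rewrite HS1 QL; lintac.
    - by move=> r x y /=; rewrite QL; lintac.
    - by move=> r x y /=; rewrite PL; lintac.
  have g4E : forall y e, g4 (E y e) = Nf a y * Q (S1 e).
    move=> y e; apply: (Un11 _ (fun y => g4 (E y e)) (fun y => Nf a y * Q (S1 e))).
    - by move=> r x y' /=; rewrite (HEl e r x y') g4l.
    - by move=> r x y' /=; rewrite (HN a).1; lintac.
    - by move=> c d; rewrite HE g4e (HN a).2.
  have g4L : forall x, g4 (L x) = Q a * g2 (L x).
    apply: (Un11 _ (fun x => g4 (L x)) (fun x => Q a * g2 (L x))).
    - by move=> r x y /=; rewrite HLl g4l.
    - by move=> r x y /=; rewrite HLl g2l; lintac.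
    - by move=> c d; rewrite HL g4E -HL K2t step3 mulrA.
  have g4F : forall c y, g4 (F c y) = P c * Q a * Q (M2 y).
    move=> c; apply: (Un11 _ (fun y => g4 (F c y)) (fun y => P c * Q a * Q (M2 y))).
    - by move=> r x y /=; rewrite HFl g4l.
    - by move=> r x y /=; rewrite HM2l QL; lintac.
    - by move=> d e; rewrite HF g4e HM2 Qm mulrA.
  have g4R : forall x, g4 (R x) = P (C2 x) * Q a.
    apply: (Un11 _ (fun x => g4 (R x)) (fun x => P (C2 x) * Q a)).
    - by move=> r x y /=; rewrite HRl g4l.
    - by move=> r x y /=; rewrite HC2l PL; lintac.
    - move=> c d; rewrite HR g4F HC2 (HM d).2 QA -scalerAr mulr1 (linZ PL).
      by rewrite -scalerAl.
  have e1 := g4L (Delta1 b).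
  rewrite K2e HLR g4R (HC b).2 in e1.
  by rewrite e1.
move=> a a'.
change (P a * Q a' = Q a' * P a).
by rewrite step4.
Qed.
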